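(* Let $d$ be a positive integer and $I$ a nonzero square free monomial ideal of $S=K[x_1,\ldots,x_n]$ generated in degrees $\geq d$ with $\rho_d(I)>0$. The following are equivalent: (1) $\operatorname{sdepth}_S I=d$; (2) there exist square free monomials of degree $d$ in $I$ which generate an ideal $I'$ with $\rho_d(I')>\rho_{d+1}(I')$.
   Context: $K$ is a field; for a monomial ideal $L$, $\rho_k(L)$ denotes the number of square free monomials of degree $k$ belonging to $L$. Stanley depth: let $P_{I}$ be the (finite) poset of all square free monomials in $I$, ordered by divisibility. For a partition $\mathcal P$ of $P_{I}$ into disjoint intervals $[u_i,v_i]=\{w\in P_{I}: u_i\mid w,\ w\mid v_i\}$, set $\operatorname{sdepth}\mathcal P=\min_i\deg v_i$; then $\operatorname{sdepth}_S I=\max_{\mathcal P}\operatorname{sdepth}\mathcal P$, the maximum over all such partitions. *)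

(* Defs.v *)
From mathcomp Require Import all_boot.
Set Implicit Arguments. Unset Strict Implicit. Unset Printing Implicit Defensive.

(* A square free monomial x_{i1}...x_{ik} of S = K[x_1..x_n] is identified
   with its support, a subset of 'I_n; its degree is the cardinality.
   A square free monomial ideal I is represented by the set P_I of the
   square free monomials it contains (which determines I). *)

Definition sqmon (n : nat) := {set 'I_n}.

(* P is the set of square free monomials of a square free monomial ideal:
   closed under multiplication by monomials, i.e. upward closed. *)
Definition sqfree_ideal (n : nat) (P : {set sqmon n}) : Prop :=
  forall u w : sqmon n, u \in P -> u \subset w -> w \in P.

Definition gen_ideal (n : nat) (G : {set sqmon n}) : {set sqmon n} :=
  [set w : sqmon n | [exists u in G, u \subset w]].

Definition rho (n : nat) (k : nat) (P : {set sqmon n}) : nat :=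
  #|[set w in P | #|w| == k]|.

Definition intv (n : nat) (P : {set sqmon n}) (u v : sqmon n) : {set sqmon n} :=
  [set w in P | (u \subset w) && (w \subset v)].

Definition interval_partition (n : nat) (P : {set sqmon n})
    (Q : {set sqmon n * sqmon n}) : bool :=
  [forall p in Q, [&& p.1 \in P, p.2 \in P & p.1 \subset p.2]] &&
  [forall w in P, [exists p in Q, w \in intv P p.1 p.2]] &&
  [forall p in Q, forall q in Q,
      (p != q) ==> [disjoint intv P p.1 p.2 & intv P q.1 q.2]].

(* sdepth of a partition: min_i deg v_i (intervals have degree <= n) *)
Definition sdepth_part (n : nat) (Q : {set sqmon n * sqmon n}) : nat :=
  \big[minn/n]_(p in Q) #|p.2|.

Definition sdepth (n : nat) (P : {set sqmon n}) : nat :=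
  \max_(Q : {set sqmon n * sqmon n} | interval_partition P Q) sdepth_part Q.

(* Main.v *)
Require Import Defs.
From mathcomp Require Import all_boot zify.
From Stdlib Require Import Classical.
Set Implicit Arguments. Unset Strict Implicit. Unset Printing Implicit Defensive.

Definition nb (T U : finType) (R : T -> U -> bool) (B : {set T}) : {set U} :=
  [set y | [exists x in B, R x y]].

Lemma nbP (T U : finType) (R : T -> U -> bool) (B : {set T}) y :
  reflect (exists2 x, x \in B & R x y) (y \in nb R B).
Proof.
rewrite inE; apply: (iffP existsP) => [[x /andP[]] | [x xB Rxy]]; first by exists x.
by exists x; rewrite xB.
Qed.

Lemma hall (T U : finType) (y0 : U) : forall m (R : T -> U -> bool) (A : {set T}),
  #|A| <= m ->
  (forall B : {set T}, B \subset A -> #|B| <= #|nb R B|) ->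
  exists f : T -> U, (forall x, x \in A -> R x (f x)) /\ {in A &, injective f}.
Proof.
elim=> [|m IH] R A hA hH.
  exists (fun _ => y0).
  have A0: A = set0 by apply/cards0_eq; lia.
  by rewrite A0; split => [x|x]; rewrite inE.
case: (boolP [exists B : {set T}, [&& B \subset A, B != set0, B != A & #|nb R B| <= #|B|]]).
- case/existsP => B /and4P [sBA B0 BA tB].
  have pBA : B \proper A by rewrite properEneq BA sBA.
  have cB := proper_card pBA.
  have [f1 [Rf1 if1]] := IH R B (ltac:(lia)) (fun C sC => hH C (subset_trans sC sBA)).
  pose R2 := fun x y => R x y && (y \notin nb R B).
  have sA'A : A :\: B \subset A := subsetDl A B.
  have cA' : #|A :\: B| <= m.
    rewrite cardsD (setIidPr sBA).
    have : 0 < #|B| by rewrite card_gt0.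
    lia.
  have hH2 : forall C : {set T}, C \subset A :\: B -> #|C| <= #|nb R2 C|.
    move=> C sC.
    have CB0 : C :&: B = set0.
      apply/setP => x; rewrite !inE; case: (boolP (x \in C)) => // xC.
      by have := subsetP sC x xC; rewrite inE => /andP[/negbTE ->].
    have hCB : C :|: B \subset A by rewrite subUset sBA (subset_trans sC sA'A).
    have := hH (C :|: B) hCB.
    have := cardsUI C B; rewrite CB0 cards0.
    have sub : nb R (C :|: B) \subset nb R2 C :|: nb R B.
      apply/subsetP => y /nbP [x]; rewrite in_setU => xCB Rxy.
      rewrite in_setU; case: (boolP (y \in nb R B)) => yB; first by rewrite orbT.
      case/orP: xCB => xC; last by move: yB => /nbP []; exists x.
      by apply/orP; left; apply/nbP; exists x => //; rewrite /R2 Rxy yB.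
    have := subset_leq_card sub.
    have := cardsUI (nb R2 C) (nb R B).
    lia.
  have [f2 [Rf2 if2]] := IH R2 (A :\: B) cA' hH2.
  exists (fun x => if x \in B then f1 x else f2 x); split.
  + move=> x xA; case: ifP => xB; first exact: Rf1.
    have : x \in A :\: B by rewrite inE xB xA.
    by move/Rf2 => /andP[].
  + have inN : forall x, x \in B -> f1 x \in nb R B.
      by move=> x xB; apply/nbP; exists x => //; apply: Rf1.
    have outN : forall x, x \in A -> x \notin B -> f2 x \notin nb R B.
      move=> x xA xB; have : x \in A :\: B by rewrite inE xB xA.
      by move/Rf2 => /andP[].
    move=> x x' xA x'A /=; case: ifP => xB; case: ifP => x'B.
    * exact: if1.
    * move=> e; have := outN x' x'A (negbT x'B); by rewrite -e inN.
    * move=> e; have := outN x xA (negbT xB); by rewrite e inN.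
    * by apply: if2; rewrite inE ?xB ?x'B ?xA ?x'A.
- rewrite negb_exists => /forallP hnt.
  case: (set_0Vmem A) => [A0 | [x xA]].
    by exists (fun _ => y0); rewrite A0; split => [z|z]; rewrite inE.
  have : 0 < #|nb R [set x]|.
    have hx : [set x] \subset A by rewrite sub1set.
    by have := hH [set x] hx; rewrite cards1.
  rewrite card_gt0 => /set0Pn [y] /nbP [x']; rewrite inE => /eqP -> Rxy.
  pose R' := fun a b => R a b && (b != y).
  have hH' : forall C : {set T}, C \subset A :\ x -> #|C| <= #|nb R' C|.
    move=> C sC; case: (set_0Vmem C) => [-> | [z zC]]; first by rewrite cards0.
    have sCA : C \subset A := subset_trans sC (subD1set A x).
    have xC : x \notin C.
      by apply/negP => xC; have := subsetP sC x xC; rewrite !inE eqxx.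
    have := hnt C; rewrite sCA /=.
    have -> : C != set0 by apply/set0Pn; exists z.
    have -> : C != A by apply/negP => /eqP eCA; move: xC; rewrite eCA xA.
    rewrite /= -ltnNge => lt.
    have sub : nb R C \subset y |: nb R' C.
      apply/subsetP => b /nbP [a aC Rab]; rewrite in_setU1.
      case: (boolP (b == y)) => // bny; apply/nbP; exists a => //.
      by rewrite /R' Rab bny.
    have := subset_leq_card sub; rewrite cardsU1.
    case: (_ \notin _); lia.
  have cA' : #|A :\ x| <= m by move: hA; rewrite (cardsD1 x A) xA; lia.
  have [f' [Rf' if']] := IH R' (A :\ x) cA' hH'.
  exists (fun z => if z == x then y else f' z); split.
  + move=> z zA; case: eqP => [-> //|/eqP zx].
    have hz : z \in A :\ x by rewrite !inE zx zA.
    by have := Rf' z hz => /andP[].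
  + move=> z z' zA z'A /=.
    case: eqP => [-> | /eqP zx]; case: eqP => [-> // | /eqP z'x].
    * move=> e; have hz : z' \in A :\ x by rewrite !inE z'x z'A.
      by have := Rf' z' hz; rewrite /R' -e eqxx andbF.
    * move=> e; have hz : z \in A :\ x by rewrite !inE zx zA.
      by have := Rf' z hz; rewrite /R' e eqxx andbF.
    * by apply: if'; rewrite !inE ?zx ?z'x ?zA ?z'A.
Qed.



Lemma minle (X : finType) (m : nat) (Q : {set X}) (F : X -> nat) k p :
  p \in Q -> k <= \big[minn/m]_(q in Q) F q -> k <= F p.
Proof.
move=> pQ; have : p \in index_enum X := mem_index_enum p.
elim: (index_enum X) => [|a r IH] //.
rewrite inE big_cons => /orP [/eqP <- | pr]; first by rewrite pQ leq_min => /andP[].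
case: (a \in Q); last exact: IH pr.
by rewrite leq_min => /andP[_]; apply: IH.
Qed.

Lemma minge (X : finType) (m : nat) (Q : {set X}) (F : X -> nat) k :
  k <= m -> (forall p, p \in Q -> k <= F p) -> k <= \big[minn/m]_(q in Q) F q.
Proof.
move=> km H; apply: (big_ind (fun x => k <= x)) => // x y hx hy.
by rewrite leq_min hx hy.
Qed.

Lemma sdepth_ge n (I : {set sqmon n}) Q k :
  interval_partition I Q -> k <= sdepth_part Q -> k <= sdepth I.
Proof. by move=> HQ hk; apply: leq_trans hk _; apply: (leq_bigmax_cond _ HQ). Qed.

Lemma between n (u t v : sqmon n) :
  u \subset t -> t \subset v -> #|v| <= #|u|.+1 -> t = u \/ t = v.
Proof.
move=> ut tv cv.
have c1 := subset_leq_card ut; have c2 := subset_leq_card tv.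
case: (ltngtP #|t| #|u|) => c.
- by move: c1; rewrite leqNgt c.
- right; apply/eqP; rewrite eqEcard tv /=; exact: leq_trans cv c.
- left; apply/eqP; rewrite eq_sym eqEcard ut /= c //.
Qed.

Lemma part_to_match n d (I : {set sqmon n}) Q :
  sqfree_ideal I -> (forall u, u \in I -> d <= #|u|) ->
  interval_partition I Q -> d.+1 <= sdepth_part Q ->
  exists f : sqmon n -> sqmon n,
    (forall w, w \in I -> #|w| = d -> [/\ f w \in I, #|f w| = d.+1 & w \subset f w]) /\
    {in [set w in I | #|w| == d] &, injective f}.
Proof.
move=> hI hdeg /andP [/andP [/forallP H1 /forallP H2] /forallP H3] hQ.
pose pw w := odflt (w,w) [pick p in Q | w \in intv I p.1 p.2].
have pwP : forall w, w \in I -> pw w \in Q /\ w \in intv I (pw w).1 (pw w).2.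
  move=> w wI; rewrite /pw; case: pickP => [p /andP[pQ wp] // | H].
  have := H2 w; rewrite wI /= => /existsP [p /andP[pQ wp]].
  by have := H p; rewrite pQ wp.
have pw1 : forall w, w \in I -> #|w| = d -> (pw w).1 = w.
  move=> w wI wd; have [pQ] := pwP w wI; rewrite inE => /and3P [_ s1 _].
  have := H1 (pw w); rewrite pQ /= => /and3P [p1I _ _].
  apply/eqP; rewrite eqEcard s1 wd; exact: hdeg.
have pw2 : forall w, w \in I -> d.+1 <= #|(pw w).2|.
  by move=> w wI; have [pQ _] := pwP w wI; apply: (minle pQ hQ).
pose f w := if [pick x in (pw w).2 :\: w] is Some x then x |: w else w.
have fP : forall w, w \in I -> #|w| = d ->
   [/\ f w \in I, #|f w| = d.+1, w \subset f w & f w \in intv I (pw w).1 (pw w).2].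
  move=> w wI wd; have [pQ] := pwP w wI; rewrite inE => /and3P [_ s1 s2].
  rewrite /f; case: pickP => [x x2 | none].
    have sw : w \subset x |: w by apply: subsetUr.
    have fI : x |: w \in I by apply: hI sw.
    move: x2; rewrite inE => /andP [xnw x2].
    split => //; first by rewrite cardsU1 xnw wd.
    by rewrite inE fI (pw1 w wI wd) sw subUset sub1set x2 s2.
  have : #|(pw w).2 :\: w| = 0 by apply: eq_card0 => x; apply: none.
  rewrite cardsD (setIidPr s2) wd; have := pw2 w wI; lia.
exists f; split.
  by move=> w wI wd; have [] := fP w wI wd.
move=> w w'; rewrite !inE => /andP [wI /eqP wd] /andP [w'I /eqP w'd] e.
have [_ _ _ fw] := fP w wI wd; have [_ _ _ fw'] := fP w' w'I w'd.
have [pQ _] := pwP w wI; have [p'Q _] := pwP w' w'I.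
case: (eqVneq (pw w) (pw w')) => [ep | np].
  by rewrite -(pw1 w wI wd) -(pw1 w' w'I w'd) ep.
have := H3 (pw w); rewrite pQ => /forallP /(_ (pw w')); rewrite p'Q np /= => dis.
by move: (disjointFr dis fw); rewrite e fw'.
Qed.

Lemma single_part n (I : {set sqmon n}) d :
  (forall u, u \in I -> d <= #|u|) -> d <= n -> d <= sdepth I.
Proof.
move=> hdeg dn; pose Q := [set (w, w) | w in I].
apply: (@sdepth_ge _ _ Q).
  apply/andP; split; first (apply/andP; split).
  - apply/forallP => p; apply/implyP => /imsetP [w wI ->] /=.
    by rewrite wI subxx.
  - apply/forallP => w; apply/implyP => wI; apply/existsP; exists (w, w).
    by rewrite imset_f //= inE wI subxx.
  - apply/forallP => p; apply/implyP => /imsetP [w wI ->].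
    apply/forallP => q; apply/implyP => /imsetP [w' w'I ->]; apply/implyP => ne /=.
    rewrite -setI_eq0; apply/eqP/setP => t; rewrite in_setI in_set0.
    apply/negbTE/negP => /andP []; rewrite !inE => /and3P [_ a b] /and3P [_ c e].
    have e1 : t = w by apply/eqP; rewrite eqEsubset a b.
    have e2 : t = w' by apply/eqP; rewrite eqEsubset c e.
    by move: ne; rewrite -e1 -e2 eqxx.
apply: minge => // p /imsetP [w wI ->] /=; exact: hdeg.
Qed.

Lemma match_to_part n d (I : {set sqmon n}) (f : sqmon n -> sqmon n) :
  sqfree_ideal I -> (forall u, u \in I -> d <= #|u|) -> d.+1 <= n ->
  (forall w, w \in I -> #|w| = d -> [/\ f w \in I, #|f w| = d.+1 & w \subset f w]) ->
  {in [set w in I | #|w| == d] &, injective f} -> d.+1 <= sdepth I.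
Proof.
move=> hI hdeg dn fP injf.
pose D := [set w in I | #|w| == d].
pose keys := I :\: f @: D.
pose g (w : sqmon n) := if #|w| == d then f w else w.
pose Q := [set (w, g w) | w in keys].
have keyI : forall w : sqmon n, w \in keys -> w \in I by move=> w; rewrite inE => /andP[].
have keyN : forall w : sqmon n, w \in keys -> w \notin f @: D by move=> w; rewrite inE => /andP[].
have gP : forall w : sqmon n, w \in I -> [/\ g w \in I, w \subset g w, d.+1 <= #|g w|
                                  & #|g w| <= #|w|.+1].
  move=> w wI; rewrite /g; case: ifP => [/eqP wd | /negbT wd].
    by have [a b c] := fP w wI wd; rewrite a b wd.
  rewrite wI subxx leqnSn; split => //.
  by have := hdeg w wI; rewrite ltn_neqAle eq_sym wd.
have intvP : forall w t : sqmon n, w \in I -> t \in intv I w (g w) -> t = w \/ t = g w.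
  move=> w t wI; rewrite inE => /and3P [_ a b]; apply: between a b _.
  by have [] := gP w wI.
have gk : forall w w' : sqmon n, w \in keys -> w' \in keys -> w = g w' -> w = w'.
  move=> w w' wk w'k; rewrite /g; case: ifP => // /eqP w'd e.
  by move: (keyN w wk); rewrite e imset_f // inE (keyI w' w'k) w'd eqxx.
apply: (@sdepth_ge _ _ Q).
  apply/andP; split; first (apply/andP; split).
  - apply/forallP => p; apply/implyP => /imsetP [w wk ->] /=.
    by have [a b _ _] := gP w (keyI w wk); rewrite a b keyI.
  - apply/forallP => t; apply/implyP => tI; apply/existsP.
    case: (boolP (t \in f @: D)) => [/imsetP [w wD ->] | tn].
      move: (wD); rewrite inE => /andP [wI /eqP wd].
      have wk : w \in keys.
        rewrite inE wI andbT; apply/negP => /imsetP [w0 w0D e].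
        move: w0D; rewrite inE => /andP [w0I /eqP w0d].
        have [_ c _] := fP w0 w0I w0d.
        by move: wd; rewrite e c => /esym /n_Sn.
      exists (w, g w); rewrite imset_f //= /g wd eqxx inE.
      by have [a _ c] := fP w wI wd; rewrite a c subxx.
    have tk : t \in keys by rewrite inE tn tI.
    exists (t, g t); rewrite imset_f //= inE tI subxx.
    by have [_ b _ _] := gP t tI.
  - apply/forallP => p; apply/implyP => /imsetP [w wk ->].
    apply/forallP => q; apply/implyP => /imsetP [w' w'k ->]; apply/implyP => ne /=.
    have nw : w != w' by apply: contra ne => /eqP ->.
    rewrite -setI_eq0; apply/eqP/setP => t; rewrite in_setI in_set0.
    apply/negbTE/negP => /andP [t1 t2].
    have wI := keyI w wk; have w'I := keyI w' w'k.
    case: (intvP w t wI t1) => e1; case: (intvP w' t w'I t2) => e; rewrite e1 in e.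
    + by rewrite e eqxx in nw.
    + by move: nw; rewrite (gk w w' wk w'k e) eqxx.
    + by move: nw; rewrite -(gk w' w w'k wk (esym e)) eqxx.
    + move: e; rewrite {1}/g; case: ifP => [/eqP wd | _] e; last first.
        by move: nw; rewrite (gk w w' wk w'k e) eqxx.
      move: e; rewrite /g; case: ifP => [/eqP w'd | _] e; last first.
        by move: (keyN w' w'k); rewrite -e imset_f // inE wI wd eqxx.
      move: nw; rewrite (injf w w') ?eqxx // inE ?wI ?w'I ?wd ?w'd eqxx //.
apply: minge => // p /imsetP [w wk ->] /=.
by have [] := gP w (keyI w wk).
Qed.

Theorem corollary4p2 (n d : nat) (I : {set sqmon n})
  (hd : 0 < d)
  (hI : sqfree_ideal I)
  (hnz : I != set0)
  (hdeg : forall u : sqmon n, u \in I -> d <= #|u|)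
  (hrho : 0 < rho d I) :
  sdepth I = d <->
  exists G : {set sqmon n},
    G \subset I /\ (forall u : sqmon n, u \in G -> #|u| = d) /\
    rho d.+1 (gen_ideal G) < rho d (gen_ideal G).
Proof.
have [w0 [w0I w0d]] : exists w0, w0 \in I /\ #|w0| = d.
  move: hrho; rewrite /rho card_gt0 => /set0Pn [w].
  by rewrite inE => /andP [wI /eqP wd]; exists w.
have cardn : forall u : sqmon n, #|u| <= n.
  by move=> u; have := max_card (mem u); rewrite card_ord.
have nd : d <= n by rewrite -w0d cardn.
have sdge := single_part hdeg nd.
split.
- move=> hs; apply: NNPP => hno.
  pose D := [set w in I | #|w| == d].
  pose R := fun w v : sqmon n => [&& v \in I, #|v| == d.+1 & w \subset v].
  have hH : forall B : {set sqmon n}, B \subset D -> #|B| <= #|nb R B|.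
    move=> B sB.
    have BI : B \subset I.
      by apply/subsetP => u uB; have := subsetP sB u uB; rewrite inE => /andP[].
    have Bd : forall u : sqmon n, u \in B -> #|u| = d.
      by move=> u uB; have := subsetP sB u uB; rewrite inE => /andP[_ /eqP].
    have : ~~ (rho d.+1 (gen_ideal B) < rho d (gen_ideal B)).
      by apply/negP => lt; apply: hno; exists B.
    rewrite -leqNgt => le.
    have s1 : B \subset [set w in gen_ideal B | #|w| == d].
      apply/subsetP => w wB; rewrite !inE Bd // eqxx andbT.
      by apply/existsP; exists w; rewrite wB subxx.
    have s2 : [set w in gen_ideal B | #|w| == d.+1] \subset nb R B.
      apply/subsetP => w H; apply/nbP; move: H.
      rewrite !inE => /andP [/existsP [u /andP [uB uw]] wd].
      exists u => //; rewrite /R wd uw !andbT.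
      exact: hI u w (subsetP BI u uB) uw.
    have := subset_leq_card s1; have := subset_leq_card s2; rewrite /rho in le.
    move=> a b; exact: leq_trans b (leq_trans le a).
  have [f [Rf injf]] := hall (set0 : sqmon n) (leqnn #|D|) hH.
  have fP : forall w : sqmon n, w \in I -> #|w| = d -> [/\ f w \in I, #|f w| = d.+1 & w \subset f w].
    move=> w wI wd; have wD : w \in D by rewrite inE wI wd eqxx.
    by have := Rf w wD; rewrite /R => /and3P [a /eqP b c].
  have dn1 : d.+1 <= n by have [_ c _] := fP w0 w0I w0d; rewrite -c cardn.
  have := match_to_part hI hdeg dn1 fP injf.
  by rewrite hs ltnn.
- case=> G [GI [Gd hlt]]; apply/eqP; rewrite eqn_leq sdge andbT.
  apply/bigmax_leqP => Q HQ; rewrite leqNgt; apply/negP => hQ.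
  have [f [fP injf]] := part_to_match hI hdeg HQ hQ.
  pose S := [set w in gen_ideal G | #|w| == d].
  have SI : forall w : sqmon n, w \in S -> w \in I /\ #|w| = d.
    move=> w; rewrite !inE => /andP [/existsP [u /andP [uG uw]] /eqP wd]; split => //.
    exact: hI u w (subsetP GI u uG) uw.
  have injS : {in S &, injective f}.
    move=> w w' wS w'S; apply: injf; rewrite inE;
      [have [a b] := SI w wS | have [a b] := SI w' w'S]; by rewrite a b eqxx.
  have : f @: S \subset [set w in gen_ideal G | #|w| == d.+1].
    apply/subsetP => v /imsetP [w wS ->].
    have [wI wd] := SI w wS; have [fI fd fw] := fP w wI wd.
    rewrite inE fd eqxx andbT.
    move: wS; rewrite !inE => /andP [/existsP [u /andP [uG uw]] _].
    by apply/existsP; exists u; rewrite uG (subset_trans uw fw).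
  move/subset_leq_card; rewrite card_in_imset // => le.
  by move: hlt; rewrite /rho ltnNge le.
Qed.
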